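(* For all positive integers $n$ and $w$ with $w \le n$ and all (nonnegative integers) $m \le n$, $$U(n,w,m) \ge \frac{m}{n}\binom{n}{w}.$$
   Context: An $(n,4,w)$ constant-weight code is a set of binary vectors of length $n$ and Hamming weight $w$ any two of which are at Hamming distance at least $4$. $U(n,w,m)$ denotes the largest possible cardinality of a union of $m$ constant-weight codes, each with parameters $(n,4,w)$. *)

(* Defs.v *)
From mathcomp Require Import all_boot all_order all_algebra.
Set Implicit Arguments. Unset Strict Implicit. Unset Printing Implicit Defensive.

(* Binary vectors of length n are represented by their supports: {set 'I_n}. *)

Definition hamming (n : nat) (x y : {set 'I_n}) : nat :=
  #|x :\: y| + #|y :\: x|.

Definition hweight (n : nat) (x : {set 'I_n}) : nat := #|x|.

Definition cw_code (n w : nat) (C : {set {set 'I_n}}) : bool :=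
  [forall x in C, hweight x == w] &&
  [forall x in C, forall y in C, (x != y) ==> (4 <= hamming x y)].

Definition U (n w m : nat) : nat :=
  \max_(F : {ffun 'I_m -> {set {set 'I_n}}} | [forall i, cw_code w (F i)])
     #|\bigcup_(i < m) F i|.

(* Main.v *)
Require Import Defs.
From mathcomp Require Import all_boot all_order all_algebra.
Set Implicit Arguments. Unset Strict Implicit. Unset Printing Implicit Defensive.
Import GRing.Theory Num.Theory.

Section S.
Variable n' : nat.
Local Notation T := 'I_n'.+1.

Definition sx (x : {set T}) : T := (\sum_(i in x) i)%R.

Definition cls (w : nat) (k : T) : {set {set T}} :=
  [set x : {set T} | (#|x| == w) && (sx x == k)].

Lemma cls_code w k : cw_code w (cls w k).
Proof.
apply/andP; split.
  by apply/forall_inP => x; rewrite inE => /andP[].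
apply/forall_inP => x; rewrite inE => /andP[/eqP hx /eqP sxk].
apply/forall_inP => y; rewrite inE => /andP[/eqP hy /eqP syk].
apply/implyP => xy.
rewrite /hamming.
have e1 : #|x :\: y| = #|y :\: x|.
  by rewrite !cardsD hx hy setIC.
rewrite e1.
have nz : 0 < #|y :\: x|.
  rewrite card_gt0; apply/negP => /eqP/setP H.
  have sub : y \subset x.
    by apply/subsetP => z zy; apply/negPn/negP => zx; move: (H z); rewrite !inE zx zy.
  move: xy; rewrite eq_sym; case/negP.
  by rewrite eqEcard sub hx hy leqnn.
case: (ltngtP #|y :\: x| 1) => [|h2|h1]; first by rewrite ltnNge nz.
  by apply: (leq_add h2 h2).
exfalso.
move/eqP/cards1P: (h1) => [j hj].
move: h1; rewrite -e1 => /eqP/cards1P [i hi].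
have ex : sx x = (sx (x :&: y) + i)%R.
  by rewrite /sx (big_setID y) /= hi big_set1.
have ey : sx y = (sx (y :&: x) + j)%R.
  by rewrite /sx (big_setID x) /= hj big_set1.
have ij : i = j.
  by apply: (addrI (sx (x :&: y))); rewrite -ex setIC -ey sxk syk.
have : i \in x :\: y by rewrite hi set11.
have : j \in y :\: x by rewrite hj set11.
by rewrite ij !inE => /andP[/negP nx _] /andP[_ jx]; exact: nx jx.
Qed.

Variables (w m : nat).
Hypothesis hm : m <= n'.+1.

Definition D : {set T} := [set (inord (val i) : T) | i : 'I_m].

Lemma card_D : #|D| = m.
Proof.
rewrite card_imset ?card_ord // => i j /(congr1 val).
have hi : (val i <= n')%N by rewrite -ltnS (leq_trans (ltn_ord i) hm).
have hj : (val j <= n')%N by rewrite -ltnS (leq_trans (ltn_ord j) hm).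
by rewrite /= !inordK // => /val_inj.
Qed.

Definition Fam (a : T) : {ffun 'I_m -> {set {set T}}} :=
  [ffun i => cls w (a + inord (val i))%R].

Lemma union_eq a : \bigcup_(i < m) Fam a i = [set x : {set T} | (#|x| == w) && ((sx x - a)%R \in D)].
Proof.
apply/setP => x; rewrite inE; apply/bigcupP/andP.
  move=> [i _]; rewrite ffunE inE => /andP[hw /eqP e]; split => //.
  by rewrite e (addrC a) addrK; apply/imsetP; exists i.
move=> [hw /imsetP [i _ e]]; exists i => //.
by rewrite ffunE inE hw -e addrC subrK eqxx.
Qed.

Lemma card_sel (P Q : pred {set T}) :
  #|[set x | P x && Q x]| = \sum_(x | P x) (Q x : nat).
Proof.
rewrite -sum1dep_card big_mkcondr /=; apply: eq_bigr => x _; by case: (Q x).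
Qed.

Lemma sum_union : \sum_(a : T) #|\bigcup_(i < m) Fam a i| = 'C(n'.+1, w) * m.
Proof.
under eq_bigr => a _ do rewrite union_eq card_sel.
rewrite exchange_big /=.
under eq_bigr => x _.
  have -> : \sum_(a : T) (((sx x - a)%R \in D) : nat) = m.
    rewrite -card_D -(@card_preimset _ (fun a => sx x - a)%R D).
      rewrite -sum1dep_card [RHS]big_mkcond /=; apply: eq_bigr => a _.
      by case: (_ \in D).
    by move=> a b /addrI /oppr_inj.
  over.
by rewrite sum_nat_const -[X in 'C(X, _)](card_ord n'.+1) -card_draws cardsE.
Qed.

End S.

Theorem proposition19 (n w m : nat) :
  0 < n -> 0 < w -> w <= n -> m <= n ->
  ((m%:R / n%:R) * ('C(n, w))%:R <= (U n w m)%:R :> rat)%R.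
Proof.
case: n => [//|n'] _ _ hw hm.
pose f := fun a : 'I_n'.+1 => #|\bigcup_(i < m) Fam w m a i|.
case: (@arg_maxnP _ ord0 xpredT f isT) => a0 _ ha0.
have hU : f a0 <= U n'.+1 w m.
  rewrite /U; apply: (leq_bigmax_cond (Fam w m a0)).
  by apply/forallP => i; rewrite ffunE; exact: cls_code.
have key : 'C(n'.+1, w) * m <= n'.+1 * U n'.+1 w m.
  rewrite -(sum_union w hm).
  apply: (@leq_trans (\sum_(a : 'I_n'.+1) f a0)).
    by apply: leq_sum => a _; exact: ha0.
  by rewrite sum_nat_const card_ord leq_mul2l hU orbT.
rewrite mulrAC ler_pdivrMr ?ltr0n // -!natrM ler_nat.
by rewrite mulnC (mulnC (U _ _ _)).
Qed.
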